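(* Let $X,Y$ be real-valued random variables on an atomless probability space. Then: (i) if $\mathbb E[Y_+]=\infty$, then $X\le_{\rm cx}Y$ is equivalent to $X\le_{\rm dcx}Y$; (ii) if $\mathbb E[Y_-]=\infty$, then $X\le_{\rm cx}Y$ is equivalent to $X\le_{\rm icx}Y$; (iii) if $\mathbb E[Y_+]=\mathbb E[Y_-]=\infty$, then both $Y\le^\dagger_{\rm cx}X$ and $X\le_{\rm cx}Y$ hold.
   Context: $x_+=\max\{x,0\}$, $x_-=\max\{-x,0\}$. An expectation $\mathbb E[Z]$ is well-defined if $\mathbb E[Z_+]<\infty$ or $\mathbb E[Z_-]<\infty$. $\mathcal U_{\rm cx}$ (resp. $\mathcal U_{\rm icx}$, $\mathcal U_{\rm dcx}$) denotes the set of convex (resp. increasing convex, decreasing convex) functions $\mathbb R\to\mathbb R$. For $*\in\{\rm cx,icx,dcx\}$, $X\le_*Y$ means $\mathbb E[u(X)]\le\mathbb E[u(Y)]$ for all $u\in\mathcal U_*$ such that both expectations are well-defined. $X\le^\dagger_{\rm cx}Y$ means $\mathbb E[u(X)]\le\mathbb E[u(Y)]$ for all $u\in\mathcal U_{\rm cx}$ such that both expectations are finite. *)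

(* Defs.v *)
From HB Require Import structures.
From mathcomp Require Import all_boot all_order all_algebra.
From mathcomp Require Import all_classical all_reals all_analysis.
Set Implicit Arguments. Unset Strict Implicit. Unset Printing Implicit Defensive.
Import Order.TTheory GRing.Theory Num.Theory Num.Def.
Local Open Scope classical_set_scope.
Local Open Scope ring_scope.

Section convex_orders.
Context {d : measure_display} {T : measurableType d} {R : realType}.
Variable P : probability T R.

Definition atomless : Prop :=
  forall A : set T, measurable A -> (0 < P A)%E ->
    exists B : set T, [/\ measurable B, B `<=` A & (0 < P B < P A)%E].

Definition pos_part (Z : T -> R) : T -> R := fun w => maxr (Z w) 0.
Definition neg_part (Z : T -> R) : T -> R := fun w => maxr (- Z w) 0.

Definition exp_well_defined (Z : T -> R) : Prop :=
  ('E_P[pos_part Z] < +oo)%E \/ ('E_P[neg_part Z] < +oo)%E.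

Definition exp_finite (Z : T -> R) : Prop :=
  ('E_P[pos_part Z] < +oo)%E /\ ('E_P[neg_part Z] < +oo)%E.

Definition cvx (u : R -> R) : Prop := convex_function (E := R^o) setT u.
Definition incr (u : R -> R) : Prop := {homo u : x y / x <= y}.
Definition decr (u : R -> R) : Prop := {homo u : x y /~ x <= y}.

Definition le_cx (X Y : T -> R) : Prop :=
  forall u : R -> R, cvx u ->
    exp_well_defined (u \o X) -> exp_well_defined (u \o Y) ->
    ('E_P[u \o X] <= 'E_P[u \o Y])%E.
Definition le_icx (X Y : T -> R) : Prop :=
  forall u : R -> R, cvx u -> incr u ->
    exp_well_defined (u \o X) -> exp_well_defined (u \o Y) ->
    ('E_P[u \o X] <= 'E_P[u \o Y])%E.
Definition le_dcx (X Y : T -> R) : Prop :=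
  forall u : R -> R, cvx u -> decr u ->
    exp_well_defined (u \o X) -> exp_well_defined (u \o Y) ->
    ('E_P[u \o X] <= 'E_P[u \o Y])%E.
Definition le_cx_dagger (X Y : T -> R) : Prop :=
  forall u : R -> R, cvx u ->
    exp_finite (u \o X) -> exp_finite (u \o Y) ->
    ('E_P[u \o X] <= 'E_P[u \o Y])%E.
End convex_orders.

(* Main.v *)
Require Import Defs.
From HB Require Import structures.
From mathcomp Require Import all_boot all_order all_algebra.
From mathcomp Require Import all_classical all_reals all_analysis.
From mathcomp Require Import ring lra.
Import Order.TTheory GRing.Theory Num.Theory Num.Def.
Local Open Scope ring_scope.

Lemma cvx_slope (R : realType) (u : R -> R) (x y z : R) : cvx u -> x < y -> y < z ->
  u y + (z - y) * ((u y - u x) / (y - x)) <= u z.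
Proof.
move=> cu xy yz.
have zx : 0 < z - x by lra.
have t0 : 0 <= (z - y) / (z - x) by apply: divr_ge0; lra.
have t1 : (z - y) / (z - x) <= 1 by rewrite ler_pdivrMr //; lra.
have := cu (Itv01 t0 t1) x z; rewrite !inE => /(_ I I) H.
have E : ((z - y) / (z - x) * x + (1 - (z - y) / (z - x)) * z) = y.
  by field; lra.
have H' : u ((z - y) / (z - x) * x + (1 - (z - y) / (z - x)) * z) <=
   (z - y) / (z - x) * u x + (1 - (z - y) / (z - x)) * u z by exact: H.
rewrite E in H'.
have yx : 0 < y - x by lra.
rewrite -subr_ge0.
have -> : u z - (u y + (z - y) * ((u y - u x) / (y - x))) =
   (z - x) / (y - x) * (((z - y) / (z - x) * u x + (1 - (z - y) / (z - x)) * u z) - u y).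
  by field; lra.
apply: mulr_ge0; last by rewrite subr_ge0.
by apply: divr_ge0; lra.
Qed.

Lemma aux1 (R: realFieldType) (a c b : R) : a <= c -> 0 <= b -> a - (c + b) <= 0.
Proof. move=> *; lra. Qed.
Lemma aux2 (R: realFieldType) (uy uv p q r t w m : R) : uy + p <= uv -> p = q - r -> r <= t -> - w <= uy -> uv <= m -> q - (t + w) <= m.
Proof. move=> *; lra. Qed.
Lemma aux3 (R: realFieldType) (s t w m : R) : 0 <= t -> 0 <= w -> 0 <= m -> s * 0 - (t + w) <= m.
Proof. rewrite mulr0; move=> *; lra. Qed.

Lemma slope_bound (R : realType) (u : R -> R) (x y v : R) : cvx u -> x < y -> u x < u y ->
  (u y - u x) / (y - x) * maxr v 0 - ((u y - u x) / (y - x) * `|y| + `|u y|) <= maxr (u v) 0.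
Proof.
move=> cu xy uxy.
set s := (u y - u x) / (y - x).
have s0 : 0 < s by apply: divr_gt0; lra.
have uy1 : - `|u y| <= u y by rewrite lerNl ler_normr lexx orbT.
have uy2 : 0 <= `|u y| by [].
have y1 : y <= `|y| by rewrite ler_norm.
have y2 : - y <= `|y| by rewrite -normrN ler_norm.
have m1 : u v <= maxr (u v) 0 by rewrite le_max lexx.
have m2 : 0 <= maxr (u v) 0 by rewrite le_max lexx orbT.
have [vy|yv] := leP v y.
  have h : maxr v 0 <= `|y| by rewrite ge_max (le_trans vy y1) normr_ge0.
  have h2 : s * maxr v 0 <= s * `|y| by rewrite ler_pM2l.
  apply: le_trans m2; exact: (@aux1 _ _ _ _ h2 uy2).
have H := @cvx_slope R u x y v cu xy yv; rewrite -/s in H.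
have [v0|v0] := leP 0 v.
  have e : s * (v - y) = s * v - s * y by rewrite mulrBr.
  have f : s * y <= s * `|y| by rewrite ler_pM2l.
  rewrite mulrC in H; exact: (@aux2 _ _ _ _ _ _ _ _ _ H e f uy1 m1).
have g : 0 <= s * `|y| by rewrite mulr_ge0 // ltW.
exact: (@aux3 _ _ _ _ _ g uy2 m2).
Qed.

Lemma cvx_opp (R : realType) (u : R -> R) : cvx u -> cvx (fun z => u (- z)).
Proof.
move=> cu t a b _ _ /=.
rewrite convN.
by apply: cu; rewrite inE.
Qed.

Section S.
Context {d : measure_display} {T : measurableType d} {R : realType}.
Variable P : probability T R.

Lemma le_int_nm (f g : T -> \bar R) : (forall x, (0 <= f x)%E) -> (forall x, (f x <= g x)%E) ->
  (\int[P]_x f x <= \int[P]_x g x)%E.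
Proof.
move=> f0 fg; rewrite !ge0_integralTE //; last by move=> x; exact: le_trans (f0 x) (fg x).
apply: ereal_sup_le => _ [h hf <-]; exists h => //= x; exact: le_trans (hf x) (fg x).
Qed.

Lemma inf_transfer (f g : T -> R) (s C : R) : measurable_fun setT f -> 0 < s -> 0 <= C ->
  (forall w, s * maxr (f w) 0 - C <= maxr (g w) 0) ->
  ('E_P[pos_part f] = +oo)%E -> ('E_P[pos_part g] = +oo)%E.
Proof.
move=> mf s0 C0 H; rewrite unlock => Ef.
pose h w := maxr (s * maxr (f w) 0 - C) 0.
have mh : measurable_fun setT h.
  apply: measurable_realfun.measurable_maxr => //; apply: measurable_realfun.measurable_funB => //.
  apply: measurable_realfun.measurable_funM => //; exact: measurable_realfun.measurable_maxr.
have le1 : (\int[P]_w (h w)%:E <= \int[P]_w (pos_part g w)%:E)%E.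
  apply: le_int_nm => x; rewrite lee_fin /h /pos_part.
    by rewrite le_max lexx orbT.
  rewrite ge_max; apply/andP; split; first exact: H.
  by rewrite le_max lexx orbT.
have : (+oo <= \int[P]_w (h w)%:E + C%:E)%E.
  rewrite -Ef.
  have -> : (C%:E = \int[P]_w (cst C%:E w))%E.
    rewrite (integral_cst P measurableT C%:E) -[LHS]mule1; congr (_ * _)%E; symmetry; exact: probability_setT.
  rewrite -ge0_integralD //; last 2 first.
  - by move=> x _; rewrite lee_fin le_max lexx orbT.
  - exact/measurable_realfun.measurable_EFinP.
  apply: (@le_trans _ _ (s%:E * \int[P]_w (pos_part f w)%:E)%E).
    by rewrite Ef gt0_muley ?lte_fin.
  rewrite -ge0_integralZl_EFin //; last 3 first.
  - by move=> x _; rewrite lee_fin le_max lexx orbT.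
  - apply/measurable_realfun.measurable_EFinP; exact: measurable_realfun.measurable_maxr.
  - exact: ltW.
  apply: ge0_le_integral => //.
  - by move=> x _; rewrite /pos_part -EFinM lee_fin mulr_ge0 ?(ltW s0) // le_max lexx orbT.
  - apply/measurable_realfun.measurable_EFinP; apply: measurable_realfun.measurable_funM => //; exact: measurable_realfun.measurable_maxr.
  - apply/measurable_realfun.measurable_EFinP; apply: measurable_realfun.measurable_funD => //.
  - move=> x _; rewrite -EFinM -EFinD lee_fin /h /pos_part.
    rewrite -lerBlDr le_max lexx //.
rewrite leye_eq => /eqP.
move: le1; case: (\int[P]_w (h w)%:E)%E => // H1 _; apply/eqP; by rewrite -leye_eq.
Qed.

Lemma wd_inf (g : T -> R) : ('E_P[pos_part g] = +oo)%E -> exp_well_defined P g ->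
  ('E_P[g] = +oo)%E.
Proof.
move=> Hp [|]; first by rewrite Hp ltxx.
rewrite unlock in Hp * => Hn.
rewrite integralE.
have Ep : (\int[P]_x ((fun x => (g x)%:E)^\+ x) = \int[P]_x (pos_part g x)%:E)%E.
  by apply: eq_integral => x _; have := funerpos g => /(congr1 (fun F => F x)).
have En : (\int[P]_x ((fun x => (g x)%:E)^\- x) = \int[P]_x (neg_part g x)%:E)%E.
  by apply: eq_integral => x _; have := funerneg g => /(congr1 (fun F => F x)).
rewrite Ep En Hp.
have : (0 <= \int[P]_x (neg_part g x)%:E)%E.
  by apply: integral_ge0 => x _; rewrite lee_fin le_max lexx orbT.
move: Hn; case: (\int[P]_x (neg_part g x)%:E)%E => //.
Qed.

Lemma up_inf (u : R -> R) (f : T -> R) (x y : R) : measurable_fun setT f -> cvx u ->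
  x < y -> u x < u y -> ('E_P[pos_part f] = +oo)%E -> ('E_P[pos_part (u \o f)] = +oo)%E.
Proof.
move=> mf cu xy uxy.
have s0 : 0 < (u y - u x) / (y - x) by apply: divr_gt0; rewrite subr_gt0.
apply: (@inf_transfer f (u \o f) ((u y - u x) / (y - x))
   ((u y - u x) / (y - x) * `|y| + `|u y|) mf s0).
  by rewrite addr_ge0 // mulr_ge0 // ltW.
move=> w; exact: slope_bound.
Qed.

Lemma down_inf (u : R -> R) (f : T -> R) (x y : R) : measurable_fun setT f -> cvx u ->
  x < y -> u y < u x -> ('E_P[neg_part f] = +oo)%E -> ('E_P[pos_part (u \o f)] = +oo)%E.
Proof.
move=> mf cu xy uxy Hn.
have -> : u \o f = (fun z => u (- z)) \o (fun w => - f w).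
  by apply/funext => w /=; rewrite opprK.
apply: (@up_inf (fun z => u (- z)) (fun w => - f w) (- y) (- x)).
- exact: measurable_realfun.measurable_funN.
- exact: cvx_opp.
- by rewrite ltrN2.
- by rewrite /= !opprK.
- exact: Hn.
Qed.

End S.



Theorem lemma1 (d : measure_display) (T : measurableType d) (R : realType)
  (P : probability T R) (X Y : {RV P >-> R}) :
  atomless P ->
  [/\ ('E_P[pos_part Y] = +oo)%E -> (le_cx P X Y <-> le_dcx P X Y),
      ('E_P[neg_part Y] = +oo)%E -> (le_cx P X Y <-> le_icx P X Y) &
      ('E_P[pos_part Y] = +oo)%E -> ('E_P[neg_part Y] = +oo)%E ->
        le_cx_dagger P Y X /\ le_cx P X Y].
Proof.
move=> _.
have mY : measurable_fun setT Y := measurable_funPT Y.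
have key : forall u, cvx u -> ~ decr u -> ('E_P[pos_part Y] = +oo)%E ->
    ('E_P[pos_part (u \o Y)] = +oo)%E.
  move=> u cu nd Yp.
  have [x [y [xy uxy]]] : exists x y, x < y /\ u x < u y.
    apply: contrapT => H; apply: nd => a b ab; rewrite leNgt; apply/negP => lt.
    apply: H; exists b, a; split => //.
    rewrite lt_neqAle ab andbT; apply/eqP => eab; subst.
    by rewrite ltxx in lt.
  exact: (up_inf P u Y x y mY cu xy uxy Yp).
have key2 : forall u, cvx u -> ~ incr u -> ('E_P[neg_part Y] = +oo)%E ->
    ('E_P[pos_part (u \o Y)] = +oo)%E.
  move=> u cu nd Yn.
  have [x [y [xy uxy]]] : exists x y, x < y /\ u y < u x.
    apply: contrapT => H; apply: nd => a b ab; rewrite leNgt; apply/negP => lt.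
    apply: H; exists a, b; split => //.
    rewrite lt_neqAle ab andbT; apply/eqP => eab; subst.
    by rewrite ltxx in lt.
  exact: (down_inf P u Y x y mY cu xy uxy Yn).
have cst_case : forall u, decr u -> incr u -> forall Z : T -> R, u \o Z = cst (u 0).
  move=> u du iu Z; apply/funext => w /=.
  case/orP: (le_total (Z w) 0) => h; apply: le_anti; by rewrite (iu _ _ h) (du _ _ h).
split.
- move=> Yp; split => [H u cu _|H u cu wX wY]; first exact: H.
  case: (pselect (decr u)) => [du|nd]; first exact: H.
  by rewrite (wd_inf P _ (key u cu nd Yp) wY) leey.
- move=> Yn; split => [H u cu _|H u cu wX wY]; first exact: H.
  case: (pselect (incr u)) => [iu|nd]; first exact: H.
  by rewrite (wd_inf P _ (key2 u cu nd Yn) wY) leey.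
- move=> Yp Yn; split.
  + move=> u cu [fY1 _] _.
    case: (pselect (decr u)) => [du|nd]; last first.
      by move: fY1; rewrite (key u cu nd Yp) ltxx.
    case: (pselect (incr u)) => [iu|nd]; last first.
      by move: fY1; rewrite (key2 u cu nd Yn) ltxx.
    by rewrite !cst_case // !expectation_cst.
  + move=> u cu wX wY.
    case: (pselect (decr u)) => [du|nd]; last first.
      by rewrite (wd_inf P _ (key u cu nd Yp) wY) leey.
    case: (pselect (incr u)) => [iu|nd]; last first.
      by rewrite (wd_inf P _ (key2 u cu nd Yn) wY) leey.
    by rewrite !cst_case // !expectation_cst.
Qed.
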